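(* Let $K$ be any field, let $u(x,y)\in K[x,y]\setminus K$, and let $\rho=(\alpha x+p(y),\beta y+\gamma)$ be a nonaffine triangular automorphism of $K[x,y]$, where $\alpha,\beta\in K\setminus\{0\}$, $\gamma\in K$ and $p(y)\in K[y]$ has degree at least $2$. Let $\tau=(y,x)$, so that $\tau\rho u=u(\alpha y+p(x),\beta x+\gamma)$. Then each of the following statements implies the next: (i) $u$ is biased; (ii) $\deg u<\deg(\tau\rho u)$; (iii) $\deg u\le\deg(\tau\rho u)$; (iv) $\tau\rho u$ is biased.
   Context: An automorphism $\varphi=(f,g)$ of $K[x,y]$ means $\varphi x=f$, $\varphi y=g$, and $\varphi u=u(f,g)$; composition is $(c,d)(a,b)=(a(c,d),b(c,d))$. $\deg$ denotes total degree. For $0\ne u\in K[x,y]$, $|u|$ denotes the homogeneous component of $u$ of maximal total degree, and $u$ is called biased if $\deg_x|u|\ge\deg_y|u|$, where $\deg_x,\deg_y$ are the degrees in $x$ and in $y$. *)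

(* Defs.v *)
From HB Require Import structures.
From mathcomp Require Import all_boot all_order all_algebra.
From mathcomp Require Export mpoly.
Set Implicit Arguments. Unset Strict Implicit. Unset Printing Implicit Defensive.
Import GRing.Theory.
Local Open Scope ring_scope.

Section Defs.
Variable K : fieldType.

Definition vx : {mpoly K[2]} := 'X_(0 : 'I_2).
Definition vy : {mpoly K[2]} := 'X_(1 : 'I_2).

(* total degree (deg 0 = 0, irrelevant here since u is nonconstant) *)
Definition tdeg (u : {mpoly K[2]}) : nat := (msize u).-1.

Definition topc (u : {mpoly K[2]}) : {mpoly K[2]} := pihomog mdeg (tdeg u) u.

Definition degv (i : 'I_2) (u : {mpoly K[2]}) : nat :=
  \max_(m <- msupp u) m i.

Definition deg_x (u : {mpoly K[2]}) := degv 0 u.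
Definition deg_y (u : {mpoly K[2]}) := degv 1 u.

Definition biased (u : {mpoly K[2]}) : bool :=
  (deg_y (topc u) <= deg_x (topc u))%N.

Definition aut_app (f g u : {mpoly K[2]}) : {mpoly K[2]} :=
  u \mPo [tuple f; g].

Definition peval (q : {poly K}) (w : {mpoly K[2]}) : {mpoly K[2]} :=
  (map_poly (@mpolyC 2 K) q).[w].

End Defs.

(* Main.v *)
Require Import Defs.
From HB Require Import structures.
From mathcomp Require Import all_boot all_order all_algebra.
From mathcomp Require Import mpoly.
From mathcomp Require Import zify ring.
Import GRing.Theory.
Local Open Scope ring_scope.

Module H1.
Set Implicit Arguments. Unset Strict Implicit.


Section Wt.
Variable (K : fieldType) (wt : 'X_{1..2} -> nat).
Hypothesis wtD : forall m1 m2, wt (m1 + m2)%MM = (wt m1 + wt m2)%N.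

Definition wle (w : nat) (p : {mpoly K[2]}) := forall m, (w < wt m)%N -> p@_m = 0.
Definition wlt (w : nat) (p : {mpoly K[2]}) := forall m, (w <= wt m)%N -> p@_m = 0.
Definition whom (w : nat) (p : {mpoly K[2]}) := forall m, wt m != w -> p@_m = 0.

Lemma wt0 : wt 0%MM = 0%N.
Proof. by have := wtD 0%MM 0%MM; rewrite addm0; lia. Qed.

Lemma wle0 w : wle w 0. Proof. by move=> m _; rewrite mcoeff0. Qed.
Lemma wlt0 w : wlt w 0. Proof. by move=> m _; rewrite mcoeff0. Qed.
Lemma whom0 w : whom w 0. Proof. by move=> m _; rewrite mcoeff0. Qed.

Lemma wleD w p q : wle w p -> wle w q -> wle w (p + q).
Proof. by move=> hp hq m hm; rewrite mcoeffD hp ?hq ?addr0. Qed.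
Lemma wltD w p q : wlt w p -> wlt w q -> wlt w (p + q).
Proof. by move=> hp hq m hm; rewrite mcoeffD hp ?hq ?addr0. Qed.
Lemma whomD w p q : whom w p -> whom w q -> whom w (p + q).
Proof. by move=> hp hq m hm; rewrite mcoeffD hp ?hq ?addr0. Qed.
Lemma wleN w p : wle w p -> wle w (- p).
Proof. by move=> hp m hm; rewrite mcoeffN hp ?oppr0. Qed.
Lemma wltN w p : wlt w p -> wlt w (- p).
Proof. by move=> hp m hm; rewrite mcoeffN hp ?oppr0. Qed.
Lemma wleB w p q : wle w p -> wle w q -> wle w (p - q).
Proof. by move=> hp hq; apply: wleD => //; apply: wleN. Qed.
Lemma wltB w p q : wlt w p -> wlt w q -> wlt w (p - q).
Proof. by move=> hp hq; apply: wltD => //; apply: wltN. Qed.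
Lemma wleZ w c p : wle w p -> wle w (c *: p).
Proof. by move=> hp m hm; rewrite mcoeffZ hp ?mulr0. Qed.
Lemma wltZ w c p : wlt w p -> wlt w (c *: p).
Proof. by move=> hp m hm; rewrite mcoeffZ hp ?mulr0. Qed.
Lemma whomZ w c p : whom w p -> whom w (c *: p).
Proof. by move=> hp m hm; rewrite mcoeffZ hp ?mulr0. Qed.

Lemma wle_sum (I : Type) (r : seq I) (P : pred I) (F : I -> {mpoly K[2]}) w :
  (forall x, P x -> wle w (F x)) -> wle w (\sum_(x <- r | P x) F x).
Proof. by move=> h; apply: big_ind => //; [apply: wle0| apply: wleD]. Qed.
Lemma wlt_sum (I : Type) (r : seq I) (P : pred I) (F : I -> {mpoly K[2]}) w :
  (forall x, P x -> wlt w (F x)) -> wlt w (\sum_(x <- r | P x) F x).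
Proof. by move=> h; apply: big_ind => //; [apply: wlt0| apply: wltD]. Qed.
Lemma whom_sum (I : Type) (r : seq I) (P : pred I) (F : I -> {mpoly K[2]}) w :
  (forall x, P x -> whom w (F x)) -> whom w (\sum_(x <- r | P x) F x).
Proof. by move=> h; apply: big_ind => //; [apply: whom0| apply: whomD]. Qed.

Lemma wle_mono a b p : (a <= b)%N -> wle a p -> wle b p.
Proof. by move=> hab hp m hm; apply: hp; lia. Qed.
Lemma wlt_wle a b p : (a < b)%N -> wle a p -> wlt b p.
Proof. by move=> hab hp m hm; apply: hp; lia. Qed.
Lemma wlt_le a p : wlt a p -> wle a p.
Proof. by move=> hp m hm; apply: hp; lia. Qed.
Lemma whom_wle a p : whom a p -> wle a p.
Proof. by move=> hp m hm; apply: hp; lia. Qed.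

Lemma whomX m : whom (wt m) 'X_[m].
Proof. by move=> m' hm; rewrite mcoeffX; case: (m =P m') hm => [->|]; rewrite ?eqxx. Qed.
Lemma whomC c : whom 0 c%:MP.
Proof. by move=> m hm; rewrite mcoeffC; case: (m =P 0%MM) hm => [->|]; rewrite ?wt0 ?mulr0. Qed.

Lemma wleM a b p q : wle a p -> wle b q -> wle (a + b) (p * q).
Proof.
move=> hp hq m hm; rewrite mcoeffM big1 // => -[k1 k2] /= /eqP e.
have : (a < wt k1 \/ b < wt k2)%N.
  by have := f_equal wt e; rewrite wtD; lia.
by case=> h; [rewrite hp ?mul0r | rewrite hq ?mulr0].
Qed.
Lemma wltM_l a b p q : wlt a p -> wle b q -> wlt (a + b) (p * q).
Proof.
move=> hp hq m hm; rewrite mcoeffM big1 // => -[k1 k2] /= /eqP e.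
have : (a <= wt k1 \/ b < wt k2)%N.
  by have := f_equal wt e; rewrite wtD; lia.
by case=> h; [rewrite hp ?mul0r | rewrite hq ?mulr0].
Qed.
Lemma wltM_r a b p q : wle a p -> wlt b q -> wlt (a + b) (p * q).
Proof. by move=> hp hq; rewrite mulrC addnC; apply: wltM_l. Qed.
Lemma whomM a b p q : whom a p -> whom b q -> whom (a + b) (p * q).
Proof.
move=> hp hq m hm; rewrite mcoeffM big1 // => -[k1 k2] /= /eqP e.
have : (wt k1 != a \/ wt k2 != b)%N.
  by have := f_equal wt e; rewrite wtD; lia.
by case=> h; [rewrite hp ?mul0r | rewrite hq ?mulr0].
Qed.
Lemma whomX_pow a p k : whom a p -> whom (a * k) (p ^+ k).
Proof.
move=> hp; elim: k => [|k ih]; first by rewrite expr0 muln0 -mpolyC1; apply: whomC.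
by rewrite exprS mulnS; apply: whomM.
Qed.

Lemma approxM a b A A' B B' :
  wlt a (A - A') -> wle a A' -> wlt b (B - B') -> wle b B' ->
  wlt (a + b) (A * B - A' * B').
Proof.
move=> hA hA' hB hB'.
have -> : A * B - A' * B' = (A - A') * B + A' * (B - B') by ring.
apply: wltD; first apply: wltM_l => //.
  have -> : B = B' + (B - B') by ring.
  by apply: wleD => //; apply: wlt_le.
exact: wltM_r.
Qed.

Lemma approxX a A A' k :
  wlt a (A - A') -> wle a A' -> wlt (a * k) (A ^+ k - A' ^+ k) /\ wle (a * k) (A' ^+ k).
Proof.
move=> hA hA'; elim: k => [|k [ih1 ih2]].
  by rewrite !expr0 subrr muln0; split; [apply: wlt0| rewrite -mpolyC1; apply/whom_wle/whomC].
rewrite !exprS mulnS; split; first exact: approxM.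
exact: wleM.
Qed.

End Wt.

End H1.
Import H1.
Module H2.
Set Implicit Arguments. Unset Strict Implicit.


Lemma ord2_cases (i j k : 'I_2) : i != j -> k = i \/ k = j.
Proof.
case: i => [[|[|]]] //= hi; case: j => [[|[|]]] //= hj;
case: k => [[|[|]]] //= hk _; [left|right|right|left]; exact: val_inj.
Qed.

Lemma bigprod2 (R : comNzRingType) (F : 'I_2 -> R) : \prod_(k < 2) F k = F ord0 * F ord_max.
Proof. by rewrite !big_ord_recl big_ord0 mulr1; congr (F _ * F _); apply: val_inj. Qed.
Lemma bigsum2 (F : 'I_2 -> nat) : \sum_(k < 2) F k = (F ord0 + F ord_max)%N.
Proof. by rewrite !big_ord_recl big_ord0 addr0; congr (F _ + F _)%N; apply: val_inj. Qed.

Lemma prod2 (R : comNzRingType) (i j : 'I_2) (F : 'I_2 -> R) :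
  i != j -> \prod_(k < 2) F k = F i * F j.
Proof.
move=> hij; rewrite bigprod2.
case: i hij => [[|[|]]] //= hi; case: j => [[|[|]]] //= hj _.
- by congr (F _ * F _); apply: val_inj.
- by rewrite mulrC; congr (F _ * F _); apply: val_inj.
Qed.

Lemma mdeg2 (i j : 'I_2) (m : 'X_{1..2}) : i != j -> mdeg m = (m i + m j)%N.
Proof.
move=> hij; rewrite mdegE bigsum2.
case: i hij => [[|[|]]] //= hi; case: j => [[|[|]]] //= hj _.
- by congr (m _ + m _)%N; apply: val_inj.
- by rewrite addnC; congr (m _ + m _)%N; apply: val_inj.
Qed.

Lemma mnm2_eq (i j : 'I_2) (m m' : 'X_{1..2}) : i != j ->
  m i = m' i -> m j = m' j -> m = m'.
Proof. by move=> hij h1 h2; apply/mnmP => k; case: (@ord2_cases i j k hij) => ->. Qed.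

Lemma seq_argmax (T : eqType) (s : seq T) (F : T -> nat) :
  s != [::] -> exists2 x, x \in s & forall y, y \in s -> (F y <= F x)%N.
Proof.
elim: s => // a s ih _; case: (eqVneq s [::]) => [->|/ih [x xs hx]].
  by exists a; rewrite ?mem_head // => y; rewrite inE => /eqP ->.
case: (leqP (F x) (F a)) => h.
  exists a; first exact: mem_head.
  by move=> y; rewrite inE => /orP[/eqP ->//|/hx]; lia.
exists x; first by rewrite inE xs orbT.
by move=> y; rewrite inE => /orP[/eqP ->|/hx//]; lia.
Qed.

Lemma seq_argmin (T : eqType) (s : seq T) (F : T -> nat) :
  s != [::] -> exists2 x, x \in s & forall y, y \in s -> (F x <= F y)%N.
Proof.
elim: s => // a s ih _; case: (eqVneq s [::]) => [->|/ih [x xs hx]].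
  by exists a; rewrite ?mem_head // => y; rewrite inE => /eqP ->.
case: (leqP (F a) (F x)) => h.
  exists a; first exact: mem_head.
  by move=> y; rewrite inE => /orP[/eqP ->//|/hx]; lia.
exists x; first by rewrite inE xs orbT.
by move=> y; rewrite inE => /orP[/eqP ->|/hx//]; lia.
Qed.

Section Basic.
Variable K : fieldType.
Implicit Types f g : {mpoly K[2]}.

Lemma tdeg_ge f m : f@_m != 0 -> (mdeg m <= tdeg f)%N.
Proof.
rewrite -mcoeff_msupp => /msize_mdeg_lt; rewrite /tdeg; lia.
Qed.

Lemma tdeg_attained f : f != 0 -> exists2 m, f@_m != 0 & mdeg m = tdeg f.
Proof.
rewrite -msupp_eq0 => /(@seq_argmax _ _ mdeg) [m ms hm].
exists m; first by rewrite -mcoeff_msupp.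
apply/eqP; rewrite eqn_leq tdeg_ge -?mcoeff_msupp //= /tdeg msizeE.
suff : (\max_(m0 <- msupp f) (mdeg m0).+1 <= (mdeg m).+1)%N by lia.
by apply/bigmax_leqP_seq => y ys _; have := hm y ys.
Qed.

Lemma tdeg_pos f : (forall c : K, f != c%:MP) -> (0 < tdeg f)%N.
Proof.
move=> h; rewrite lt0n; apply/negP => /eqP e.
have : (msize f <= 1)%N by move: e; rewrite /tdeg; lia.
by move/msize1_polyC => e'; move: (h f@_0); rewrite -e' eqxx.
Qed.

Lemma mcoeff_pihomog (mf : measure 2) d f m :
  (pihomog mf d f)@_m = if mf m == d then f@_m else 0.
Proof.
rewrite pihomogE raddf_sum /=.
under eq_bigr do rewrite mcoeffZ mcoeffX.
rewrite -big_filter; case: (boolP (m \in msupp f)) => hm; last first.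
  have -> : f@_m = 0 by apply/eqP; rewrite mcoeff_eq0.
  rewrite if_same big1_seq // => m' /andP[_ ]; rewrite mem_filter => /andP[_ hm'].
  by case: eqP => [e|]; [move: hm; rewrite -e hm' | rewrite mulr0].
case: ifP => hmf.
  rewrite (bigD1_seq m) /= ?eqxx ?mulr1; last first.
  - by rewrite filter_uniq // msupp_uniq.
  - by rewrite mem_filter hmf.
  by rewrite big1 ?addr0 // => m' /negbTE hne; rewrite hne mulr0.
rewrite big1_seq // => m' /andP[_ ]; rewrite mem_filter => /andP[hm' _].
case: eqP => [e|]; last by rewrite mulr0.
by rewrite e hmf in hm'.
Qed.

Lemma mcoeff_topc f m : (topc f)@_m = if mdeg m == tdeg f then f@_m else 0.
Proof. exact: mcoeff_pihomog. Qed.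

Lemma degv_ge i f m : f@_m != 0 -> (m i <= degv i f)%N.
Proof. by rewrite -mcoeff_msupp => hm; rewrite /degv (bigmaxn_sup_seq m hm). Qed.

Lemma degv_attained i f : f != 0 -> exists2 m, f@_m != 0 & degv i f = m i.
Proof.
rewrite -msupp_eq0 => /(@seq_argmax _ _ (fun m : 'X_{1..2} => m i)) [m ms hm].
exists m; first by rewrite -mcoeff_msupp.
apply/eqP; rewrite eqn_leq; apply/andP; split; last first.
  by apply: degv_ge; rewrite -mcoeff_msupp.
by apply/bigmax_leqP_seq => y ys _; exact: hm.
Qed.

End Basic.

End H2.
Import H2.


Lemma arith1 a k : (k < a)%N -> (a <= a - k.+1)%N -> False.
Proof. lia. Qed.

Lemma arith_ei d N ei ej si sj : (1 < d)%N -> (d*ei+ej = N)%N -> (d*si+sj <= N)%N -> (ei+ej <= si+sj)%N -> (si <= ei)%N.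
Proof. move=> h1 h2 h3 h4. case: (leqP si ei) => // h. have : (d * ei < d * si)%N by rewrite ltn_pmul2l //; lia. nia. Qed.
Lemma arith_fin d N a0 ri ei Ii Ij si sj : (1 < d)%N -> (ri + d*a0 = N)%N -> (d*Ii+Ij = N)%N -> (d*si+sj <= N)%N ->
  (si <= ei)%N -> (ei <= Ii)%N -> (a0 <= Ii - ei)%N -> (0 < si+sj)%N -> (sj <= si)%N -> (si + sj < ri + a0)%N.
Proof.
move=> h1 h2 h3 h4 h5 h6 h7 h8 h9.
case: a0 h2 h7 => [|a] h2 h7.
  have : (si < d * si)%N by rewrite -{1}[si]mul1n ltn_pmul2r; lia.
  lia.
have : (d * a.+1 <= d * (Ii - ei))%N by rewrite leq_pmul2l //; lia.
have : (d * ei >= 2 * ei)%N by rewrite leq_pmul2r //; lia.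
nia.
Qed.

Section G.
Variable (K : fieldType) (i j : 'I_2) (d : nat) (al be c : K).
Hypothesis hij : i != j.
Hypothesis hd : (2 <= d)%N.
Hypothesis hal : al != 0.
Hypothesis hbe : be != 0.
Hypothesis hc : c != 0.

Definition wf (m : 'X_{1..2}) := (d * m i + m j)%N.
Definition wg (m : 'X_{1..2}) := (m i + d * m j)%N.
Lemma wgD m1 m2 : wg (m1 + m2)%MM = (wg m1 + wg m2)%N.
Proof. rewrite /wg !mnmDE; lia. Qed.

Definition Topi : {mpoly K[2]} := al *: 'X_j + c *: 'X_i ^+ d.
Definition Topj : {mpoly K[2]} := be *: 'X_i.
Definition Top : 2.-tuple {mpoly K[2]} := [tuple (if k == i then Topi else Topj) | k < 2].

Lemma hji : (j == i) = false. Proof. by apply/negbTE; rewrite eq_sym. Qed.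

Lemma wg_Uj : wg U_(j)%MM = d.
Proof. by rewrite /wg !mnm1E hji eqxx /=; lia. Qed.
Lemma wg_Ui : wg U_(i)%MM = 1%N.
Proof. by rewrite /wg !mnm1E eqxx (negbTE hij) /=; lia. Qed.

Lemma whom_Topi : whom wg d Topi.
Proof.
apply: whomD; apply: whomZ; first by rewrite -wg_Uj; apply: (@whomX K wg).
have := @whomX_pow K wg wgD _ _ d (@whomX K wg U_(i)%MM).
by rewrite wg_Ui mul1n mpolyXn.
Qed.
Lemma whom_Topj : whom wg 1 Topj.
Proof. by apply: whomZ; have := @whomX K wg U_(i)%MM; rewrite wg_Ui. Qed.

Variable T : 2.-tuple {mpoly K[2]}.
Hypothesis hTi : wlt wg d (tnth T i - Topi).
Hypothesis hTj : wlt wg 1 (tnth T j - Topj).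

Lemma monoW m : wlt wg (wf m) (('X_[m] \mPo T) - ('X_[m] \mPo Top)) /\
   whom wg (wf m) ('X_[m] \mPo Top).
Proof.
rewrite comp_mpolyX (comp_mpolyX m Top) !(prod2 _ hij) !tnth_mktuple eqxx hji /wf.
have [h1 h2] := approxX wgD (m i) hTi (whom_wle whom_Topi).
have [h3 h4] := approxX wgD (m j) hTj (whom_wle whom_Topj).
have e : (d * m i + m j = d * m i + 1 * m j)%N by rewrite mul1n.
rewrite e; split; first exact: (approxM wgD).
by apply: (whomM wgD); apply: (whomX_pow wgD); [apply: whom_Topi| apply: whom_Topj].
Qed.

Variable f : {mpoly K[2]}.
Definition Nf := (\max_(m <- msupp f) wf m)%N.
Definition Lg := \sum_(m <- msupp f | wf m == Nf) f@_m *: ('X_[m] \mPo Top).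

Lemma wf_le m : m \in msupp f -> (wf m <= Nf)%N.
Proof. by move=> hm; rewrite /Nf (bigmaxn_sup_seq m hm). Qed.

Lemma stepW : wlt wg Nf ((f \mPo T) - Lg).
Proof.
rewrite comp_mpolyEX (bigID (fun m => wf m == Nf)) /= addrAC.
apply: wltD.
  rewrite /Lg -sumrB; apply: wlt_sum => m /eqP hm; rewrite -scalerBr; apply: wltZ.
  by rewrite -hm; case: (monoW m).
rewrite big_seq_cond; apply: wlt_sum => m /andP[hm hne]; apply: wltZ.
have hlt : (wf m < Nf)%N by have := wf_le m hm; rewrite ltn_neqAle hne.
apply: (wlt_wle hlt).
have [h1 h2] := monoW m.
have -> : ('X_[m] \mPo T) = ('X_[m] \mPo Top) + (('X_[m] \mPo T) - ('X_[m] \mPo Top)) by ring.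
by apply: wleD; [apply: whom_wle | apply: wlt_le].
Qed.

Lemma Lg_hom : whom wg Nf Lg.
Proof.
apply: whom_sum => m /eqP hm; apply: whomZ; rewrite -hm; by case: (monoW m).
Qed.

Definition hphi (k : 'I_2) : {poly K} := if k == j then 'X else 1.
Local Notation phi := (mmap (@polyC K) hphi).

Lemma phi_coef p a : (phi p)`_a = \sum_(r <- msupp p) p@_r * (r j == a)%:R.
Proof.
rewrite /mmap coef_sum; apply: eq_bigr => r _.
rewrite /mmap1 (prod2 _ hij) /hphi eqxx (negbTE hij) expr1n mul1r coefCM coefXn eq_sym //.
Qed.

Lemma phi_Top m : phi ('X_[m] \mPo Top) = (al%:P * 'X + c%:P) ^+ (m i) * (be%:P) ^+ (m j).
Proof.
rewrite comp_mpolyX (prod2 _ hij) !tnth_mktuple (eqxx i) hji rmorphM !rmorphXn /=.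
rewrite /Topi /Topj rmorphD /= !mmapZ rmorphXn /= !mmapX !mmap1U /hphi (eqxx j) (negbTE hij).
by rewrite expr1n !mulr1.
Qed.

Lemma phi_Lg : phi Lg = \sum_(m <- msupp f | wf m == Nf)
   (f@_m * be ^+ (m j)) *: (al%:P * 'X + c%:P) ^+ (m i).
Proof.
rewrite /Lg rmorph_sum; apply: eq_bigr => m _.
rewrite /= mmapZ phi_Top -mul_polyC rmorphM rmorphXn /=; ring.
Qed.

Hypothesis hf : (0 < tdeg f)%N.
Hypothesis hb : (degv j (topc f) <= degv i (topc f))%N.

Lemma lemG : (tdeg f < tdeg (f \mPo T))%N.
Proof.
have fn0 : f != 0.
  by apply/eqP => e; move: hf; rewrite e /tdeg msize0.
have [m0 hm0 dm0] := tdeg_attained fn0.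
have Hn0 : topc f != 0.
  apply/eqP => e; have := mcoeff_topc f m0; rewrite e mcoeff0 dm0.
  by case: eqP => [_ e'|//]; rewrite -e' eqxx in hm0.
have [ms hms dms] := degv_attained i Hn0.
have hsj : (ms j <= degv j (topc f))%N := degv_ge j hms.
move: (hms); rewrite mcoeff_topc; case: (mdeg ms =P tdeg f) => [dms'|_]; last by rewrite eqxx.
move=> hfms.
have ndef : tdeg f = (ms i + ms j)%N by rewrite -dms' (mdeg2 _ hij).
have supp_ne : msupp f != [::] by rewrite msupp_eq0.
have [mN hmN hmaxN] := seq_argmax wf supp_ne.
have NfE : Nf = wf mN.
  apply/eqP; rewrite eqn_leq wf_le // andbT.
  by apply/bigmax_leqP_seq => y hy _; apply: hmaxN.
pose S := [seq m <- msupp f | wf m == Nf].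
have S_ne : S != [::].
  apply/eqP => e; have : mN \in S by rewrite mem_filter NfE eqxx hmN.
  by rewrite e.
have [me hme hmin] := seq_argmin (fun m : 'X_{1..2} => m i) S_ne.
have [mI hmI hmax] := seq_argmax (fun m : 'X_{1..2} => m i) S_ne.
have heI : (me i <= mI i)%N := hmin mI hmI.
move: (hme) (hmI); rewrite !mem_filter => /andP[/eqP wme hme'] /andP[/eqP wmI hmI'].
have wfms : (wf ms <= Nf)%N by apply: wf_le; rewrite mcoeff_msupp.
have degme : (mdeg me <= tdeg f)%N by apply: tdeg_ge; rewrite -mcoeff_msupp.
pose e := me i.
pose A : {poly K} := al%:P * 'X + c%:P.
pose nu := \sum_(m <- msupp f | wf m == Nf) (f@_m * be ^+ (m j)) *: A ^+ (m i - e).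
have phiE : mmap (@polyC K) hphi Lg = A ^+ e * nu.
  rewrite phi_Lg /nu mulr_sumr big_seq_cond [RHS]big_seq_cond.
  apply: eq_bigr => m /andP[hm wm].
  have : (e <= m i)%N by apply: hmin; rewrite mem_filter wm hm.
  by move=> hle; rewrite -scalerAr -exprD subnKC.
have sizeA : size A = 2%N.
  by rewrite /A size_MXaddC polyC_eq0 (negbTE hal) /= size_polyC hal.
have An0 : A != 0 by rewrite -size_poly_eq0 sizeA.
have sizeAk k : size (A ^+ k) = k.+1.
  have h1 := size_exp A k; rewrite sizeA mul1n in h1.
  have : A ^+ k != 0 by rewrite expf_neq0.
  by rewrite -size_poly_eq0; move: h1; case: (size (A ^+ k)) => [|s] //= ->.
have leadA : lead_coef A = al.
  rewrite /lead_coef sizeA /A coefD coefCM coefX coefC /=; by rewrite mulr1 addr0.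
have coefAk k : (A ^+ k)`_k = al ^+ k.
  by have := lead_coef_exp A k; rewrite leadA /lead_coef sizeAk.
have nuI : nu`_(mI i - e) = f@_mI * be ^+ (mI j) * al ^+ (mI i - e).
  rewrite /nu coef_sum -big_filter (bigD1_seq mI) //=; last first.
    by rewrite filter_uniq // msupp_uniq.
  rewrite coefZ coefAk big_seq_cond big1 ?addr0 // => m /andP[hm hne].
  rewrite coefZ.
  have hmi : (m i < mI i)%N.
    rewrite ltn_neqAle hmax // andbT; apply: contra hne => /eqP hmi.
    move: hm; rewrite mem_filter => /andP[/eqP wm _].
    apply/eqP; apply: (mnm2_eq hij hmi).
    move: wm wmI; rewrite /wf hmi => h1 h2; apply/eqP.
    by rewrite -(eqn_add2l (d * mI i)) h1 h2.
  have hem : (e <= m i)%N by apply: hmin.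
  rewrite nth_default ?mulr0 // sizeAk; apply: ltn_sub2r => //.
  exact: leq_ltn_trans hem hmi.
have nu0 : nu`_(mI i - e) != 0.
  rewrite nuI !mulf_neq0 ?expf_neq0 //; by rewrite -mcoeff_msupp.
have exa : exists a, nu`_a != 0 by exists (mI i - e)%N.
case: (ex_minnP exa) => a0 ha0 hmina0.
have a0le : (a0 <= mI i - e)%N by apply: hmina0.
have mua0 : (mmap (@polyC K) hphi Lg)`_a0 = c ^+ e * nu`_a0.
  rewrite phiE coefM big_ord_recl subn0 big1 ?addr0.
    congr (_ * _); rewrite -horner_coef0 horner_exp /A !hornerE.
    by [].
  move=> k _; rewrite lift0.
  case: (eqVneq nu`_(a0 - k.+1) 0) => [->|hk]; first by rewrite mulr0.
  by have := hmina0 _ hk; have := ltn_ord k; move/arith1 => h /h.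
have mu0 : (mmap (@polyC K) hphi Lg)`_a0 != 0 by rewrite mua0 mulf_neq0 ?expf_neq0.
move: mu0; rewrite phi_coef => mu0.
have : ~~ all (fun r => Lg@_r * (r j == a0)%:R == 0) (msupp Lg).
  apply: contra mu0 => /allP h; rewrite big1_seq // => r /andP[_ hr]; apply/eqP; exact: h.
case/allPn => r hr /=; case: (r j =P a0) => [hrj|_]; last by rewrite mulr0 eqxx.
rewrite mulr1 => hLr.
have wgr : wg r = Nf.
  by apply/eqP; apply: contraNT hLr => hne; apply/eqP; apply: Lg_hom.
have wgr_le : (Nf <= wg r)%N by rewrite wgr.
have hgr : (f \mPo T)@_r != 0.
  have := (@stepW r wgr_le); rewrite mcoeffB => /eqP.
  by rewrite subr_eq0 => /eqP ->.
have sjsi : (ms j <= ms i)%N by rewrite -dms; exact: leq_trans hsj hb.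
have siei : (ms i <= me i)%N.
  have h := arith_ei _ _ _ _ _ _ hd (wme : (d * me i + me j)%N = Nf) (wfms : (d * ms i + ms j <= Nf)%N).
  apply: h. by rewrite -(mdeg2 _ hij) -ndef.
have hpos : (0 < ms i + ms j)%N by rewrite -ndef.
have := tdeg_ge hgr; rewrite (mdeg2 _ hij) ndef; apply: leq_trans.
move: wgr; rewrite /wg hrj => wgr.
exact: (arith_fin _ _ _ _ _ _ _ _ _ hd wgr (wmI : (d * mI i + mI j)%N = Nf) (wfms : (d * ms i + ms j <= Nf)%N) siei heI a0le hpos sjsi).
Qed.


End G.


Section PevalApprox.
Variable (K : fieldType) (wt : 'X_{1..2} -> nat) (i : 'I_2).
Hypothesis wtD : forall m1 m2, wt (m1 + m2)%MM = (wt m1 + wt m2)%N.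
Hypothesis wti : wt U_(i)%MM = 1%N.

Lemma peval_sum (p : {poly K}) (w : {mpoly K[2]}) :
  peval p w = \sum_(k < size p) (p`_k)%:MP * w ^+ k.
Proof.
rewrite /peval horner_coef size_map_inj_poly //; last exact: (can_inj (@mpolyCK 2 K)).
by apply: eq_bigr => k _; rewrite coef_map_id0.
Qed.

Lemma peval_approx (p : {poly K}) (w : {mpoly K[2]}) (b : K) d :
  size p = d.+1 -> wlt wt 1 (w - b *: 'X_i) ->
  wlt wt d (peval p w - (lead_coef p * b ^+ d) *: 'X_i ^+ d).
Proof.
move=> hs hw.
have hX : wle wt 1 (b *: 'X_i).
  by apply: wleZ; apply: whom_wle; have := @whomX K wt U_(i)%MM; rewrite wti.
have [h1 h2] := approxX wtD d hw hX; rewrite mul1n in h1 h2.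
have hwle k : wle wt k (w ^+ k).
  have [h3 h4] := approxX wtD k hw hX; rewrite mul1n in h3 h4.
  have -> : w ^+ k = (b *: 'X_i) ^+ k + (w ^+ k - (b *: 'X_i) ^+ k) by ring.
  by apply: wleD => //; apply: wlt_le.
rewrite peval_sum hs big_ord_recr /= /lead_coef hs /=.
have -> : \sum_(k < d) (p`_k)%:MP * w ^+ k + (p`_d)%:MP * w ^+ d -
   (p`_d * b ^+ d) *: 'X_i ^+ d =
   \sum_(k < d) (p`_k)%:MP * w ^+ k + p`_d *: (w ^+ d - (b *: 'X_i) ^+ d).
  by rewrite exprZn scalerBr scalerA mul_mpolyC addrA.
apply: wltD; last exact: wltZ.
apply: wlt_sum => k _; rewrite mul_mpolyC; apply: wltZ.
by apply: (wlt_wle (ltn_ord k)).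
Qed.

End PevalApprox.

Section Comp.
Variable K : fieldType.

Lemma comp_mpolyA (u : {mpoly K[2]}) (T S : 2.-tuple {mpoly K[2]}) :
  ((u \mPo T) \mPo S) = u \mPo [tuple (tnth T k \mPo S) | k < 2].
Proof.
rewrite (comp_mpolyEX u T) (comp_mpolyEX u) raddf_sum; apply: eq_bigr => m _.
rewrite /= comp_mpolyZ !comp_mpolyX rmorph_prod; congr (_ *: _).
by apply: eq_bigr => k _; rewrite rmorphXn tnth_mktuple.
Qed.

Lemma peval_comp (p : {poly K}) (q : {mpoly K[2]}) (S : 2.-tuple {mpoly K[2]}) :
  (peval p q \mPo S) = peval p (q \mPo S).
Proof.
rewrite !peval_sum rmorph_sum; apply: eq_bigr => k _.
by rewrite rmorphM rmorphXn /= comp_mpolyC.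
Qed.

End Comp.

Theorem corollary4p2 (K : fieldType) (u : {mpoly K[2]})
  (alpha beta gamma : K) (p : {poly K}) :
  (forall c : K, u != c%:MP) ->
  alpha != 0 -> beta != 0 -> (2 < size p)%N ->
  let tru := aut_app (alpha *: vy K + peval p (vx K))
                     (beta *: vx K + gamma%:MP) u in
  (biased u -> (tdeg u < tdeg tru)%N) /\
  ((tdeg u < tdeg tru)%N -> (tdeg u <= tdeg tru)%N) /\
  ((tdeg u <= tdeg tru)%N -> biased tru).
Proof.
move=> hu hal hbe hp tru.
set d := (size p).-1.
have hs : size p = d.+1 by rewrite /d; case: (size p) hp.
have hd : (2 <= d)%N by rewrite /d; case: (size p) hp.
set c := lead_coef p.
have hc : c != 0.
  by rewrite /c lead_coef_eq0 -size_poly_eq0 hs.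
have hu0 := tdeg_pos hu.
have i01 : (0 : 'I_2) != 1 by [].
have i10 : (1 : 'I_2) != 0 by [].
pose T1 : 2.-tuple {mpoly K[2]} := [tuple alpha *: vy K + peval p (vx K); beta *: vx K + gamma%:MP].
have truE : tru = u \mPo T1 by [].
have wgD01 : forall m1 m2, wg (0%R : 'I_2) (1%R : 'I_2) d (m1 + m2)%MM = (wg (0%R : 'I_2) (1%R : 'I_2) d m1 + wg (0%R : 'I_2) (1%R : 'I_2) d m2)%N.
  by move=> m1 m2; rewrite /wg !mnmDE; lia.
have wgU0 : wg (0%R : 'I_2) (1%R : 'I_2) d U_(0%R : 'I_2)%MM = 1%N by rewrite /wg !mnm1E /=; lia.
have wgD10 : forall m1 m2, wg (1%R : 'I_2) (0%R : 'I_2) d (m1 + m2)%MM = (wg (1%R : 'I_2) (0%R : 'I_2) d m1 + wg (1%R : 'I_2) (0%R : 'I_2) d m2)%N.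
  by move=> m1 m2; rewrite /wg !mnmDE; lia.
have wgU1 : wg (1%R : 'I_2) (0%R : 'I_2) d U_(1%R : 'I_2)%MM = 1%N by rewrite /wg !mnm1E /=; lia.
have claim1 : biased u -> (tdeg u < tdeg tru)%N.
  move=> hb; rewrite truE.
  apply: (@lemG K 0 1 d alpha beta c i01 hd hal hbe hc T1) => //.
    have -> : tnth T1 0 - Topi K 0 1 d alpha c =
        peval p 'X_0 - (c * 1 ^+ d) *: 'X_0 ^+ d.
      by rewrite /Topi (tnth_nth 0) /= /vx /vy expr1n mulr1 opprD addrACA subrr add0r.
    apply: (@peval_approx K _ _ wgD01 wgU0 p _ 1 d hs).
    by rewrite scale1r subrr; apply: wlt0.
  have -> : tnth T1 1 - Topj K 0 beta = gamma%:MP.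
    by rewrite /Topj (tnth_nth 0) /= /vx addrAC subrr add0r.
  exact: (wlt_wle (ltnSn 0) (whom_wle (whomC wgD01 _))).


split => //; split => [/ltnW //|hle].
case: (boolP (biased tru)) => // hnb; exfalso.
pose w : {mpoly K[2]} := beta^-1 *: vy K + (- gamma / beta)%:MP.
pose S : 2.-tuple {mpoly K[2]} := [tuple w; alpha^-1 *: (vx K - peval p w)].
have hinv : (tru \mPo S) = u.
  rewrite truE comp_mpolyA.
  suff -> : [tuple tnth T1 k \mPo S | k < 2] = [tuple 'X_k | k < 2] by rewrite comp_mpoly_id.
  apply: eq_from_tnth => k; rewrite !tnth_mktuple.
  case: k => [[|[|]]] // hk.
    have -> : Ordinal hk = (0 : 'I_2) by apply: val_inj.
    rewrite (tnth_nth 0) /= comp_mpolyD comp_mpolyZ peval_comp /vx /vy !comp_mpolyXU /=.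
    by rewrite scalerA mulfV // scale1r subrK.
  have -> : Ordinal hk = (1 : 'I_2) by apply: val_inj.
  rewrite (tnth_nth 0) /= comp_mpolyD comp_mpolyZ comp_mpolyC /vx !comp_mpolyXU /= /w.
  rewrite scalerDr scalerA mulfV // scale1r -mul_mpolyC -mpolyCM mulrCA mulfV // mulr1.
  by rewrite mpolyCN -addrA addNr addr0.
pose c' := - (alpha^-1 * (c * beta^-1 ^+ d)).
have hc' : c' != 0 by rewrite oppr_eq0 !mulf_neq0 ?invr_eq0 ?expf_neq0 ?invr_eq0.
have hf : (0 < tdeg tru)%N by apply: leq_trans hle.
have hb : (degv (0%R : 'I_2) (topc tru) <= degv (1%R : 'I_2) (topc tru))%N.
  by move: hnb; rewrite /biased /deg_x /deg_y -ltnNge => /ltnW.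
have : (tdeg tru < tdeg (tru \mPo S))%N.
  apply: (@lemG K 1 0 d alpha^-1 beta^-1 c' i10 hd (invr_neq0 hal) (invr_neq0 hbe) hc' S) => //.
    have -> : tnth S 1 - Topi K 1 0 d alpha^-1 c' =
        (- alpha^-1) *: (peval p w - (c * beta^-1 ^+ d) *: vy K ^+ d).
      rewrite /Topi (tnth_nth 0) /= /c' /vx /vy.
      rewrite -!mul_mpolyC !(mpolyCN, mpolyCM). ring.
    apply: wltZ; apply: (@peval_approx K _ _ wgD10 wgU1 p _ beta^-1 d hs).
    have -> : w - beta^-1 *: 'X_1 = (- gamma / beta)%:MP by rewrite /w /vy addrAC subrr add0r.
    exact: (wlt_wle (ltnSn 0) (whom_wle (whomC wgD10 _))).
  have -> : tnth S 0 - Topj K 1 beta^-1 = (- gamma / beta)%:MP.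
    by rewrite /Topj (tnth_nth 0) /= /w /vy addrAC subrr add0r.
  exact: (wlt_wle (ltnSn 0) (whom_wle (whomC wgD10 _))).
by rewrite hinv ltnNge hle.
Qed.
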